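(* Let $G$ be a group and $A_0\subseteq\operatorname{Aut}(G)$ a subgroup such that $G$ is an $\mathcal{L}(A_0)$-equational domain. Let $I$ be a set and $H=\prod_{i\in I}G$ the direct power of $G$, whose elements are tuples $(g_i\mid i\in I)$. Let $\mathcal{P}$ be a set of permutations of $I$ that is transitive on $I$ (for all $i,j\in I$ there is $\pi\in\mathcal{P}$ with $\pi(i)=j$). For $\phi\in A_0$ and $\pi\in\mathcal{P}$ define automorphisms of $H$ by $f_\phi((g_i\mid i\in I))=(\phi(g_i)\mid i\in I)$ and $\sigma_\pi((g_i\mid i\in I))=(g_{\pi(i)}\mid i\in I)$, and let $A\subseteq\operatorname{Aut}(H)$ be the group generated by $\{f_\phi,\sigma_\pi\mid\phi\in A_0,\pi\in\mathcal{P}\}$. Then $H$ is an $\mathcal{L}(A)$-equational domain.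
   Context: For a group $K$ and a subgroup $B\subseteq\operatorname{Aut}(K)$, $\mathcal{L}(B)=\{\cdot,{}^{-1},1\}\cup\{\psi\mid\psi\in B\}$ is the group language with a unary function symbol for each $\psi\in B$, interpreted as $\psi$. $\mathcal{L}(B)$-equations are $t(X)=1$ with $t$ an $\mathcal{L}(B)$-term (equivalently a product $\psi_1(x_{i_1}^{\varepsilon_1})\cdots\psi_k(x_{i_k}^{\varepsilon_k})$, $\psi_j\in B$, $\varepsilon_j=\pm1$); systems are arbitrary sets of equations and $V_K(S)$ is the solution set in $K^n$. A subset of $K^n$ is $\mathcal{L}(B)$-algebraic if it equals $V_K(S)$ for some $\mathcal{L}(B)$-system $S$ in $n$ variables. $K$ is an $\mathcal{L}(B)$-equational domain if for every $n$ the union of any two $\mathcal{L}(B)$-algebraic subsets of $K^n$ is $\mathcal{L}(B)$-algebraic. *)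

(* Defs.v *)
From mathcomp Require Import all_boot.
From Stdlib Require Import FunctionalExtensionality.
Set Implicit Arguments. Unset Strict Implicit. Unset Printing Implicit Defensive.

Record group := Group {
  gcar :> Type;
  gmul : gcar -> gcar -> gcar;
  ginv : gcar -> gcar;
  gone : gcar;
  gmulA : forall x y z, gmul (gmul x y) z = gmul x (gmul y z);
  gmul1 : forall x, gmul gone x = x;
  gmulV : forall x, gmul (ginv x) x = gone }.

Definition is_aut (K : group) (f : K -> K) : Prop :=
  (forall x y, f (gmul x y) = gmul (f x) (f y)) /\ bijective f.

Definition aut_subgroup (K : group) (B : (K -> K) -> Prop) : Prop :=
  (forall f, B f -> is_aut f) /\
  B id /\
  (forall f g, B f -> B g -> B (f \o g)) /\
  (forall f g, B f -> cancel f g -> cancel g f -> B g).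

Definition gen_aut_subgroup (K : group) (Gen : (K -> K) -> Prop) : (K -> K) -> Prop :=
  fun f => forall B, aut_subgroup B -> (forall g, Gen g -> B g) -> B f.

(* Terms in n variables of the language {.,^-1,1} together with unary
   function symbols (here: any function K -> K; L(B)-terms are those whose
   function symbols all lie in B). *)
Inductive term (K : Type) (n : nat) : Type :=
  | tVar of 'I_n
  | tOne
  | tMul of term K n & term K n
  | tInv of term K n
  | tApp of (K -> K) & term K n.

Fixpoint is_Lterm (K : Type) (n : nat) (B : (K -> K) -> Prop) (t : term K n) : Prop :=
  match t with
  | tVar _ => True
  | tOne => True
  | tMul t1 t2 => is_Lterm B t1 /\ is_Lterm B t2
  | tInv t1 => is_Lterm B t1
  | tApp f t1 => B f /\ is_Lterm B t1
  end.

Fixpoint eval (K : group) (n : nat) (x : 'I_n -> K) (t : term K n) : K :=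
  match t with
  | tVar i => x i
  | tOne => gone K
  | tMul t1 t2 => gmul (eval x t1) (eval x t2)
  | tInv t1 => ginv (eval x t1)
  | tApp f t1 => f (eval x t1)
  end.

Definition V (K : group) (n : nat) (S : term K n -> Prop) : ('I_n -> K) -> Prop :=
  fun x => forall t, S t -> eval x t = gone K.

Definition L_algebraic (K : group) (B : (K -> K) -> Prop) (n : nat)
  (Y : ('I_n -> K) -> Prop) : Prop :=
  exists S : term K n -> Prop,
    (forall t, S t -> is_Lterm B t) /\ (forall x, Y x <-> V S x).

Definition L_equational_domain (K : group) (B : (K -> K) -> Prop) : Prop :=
  forall (n : nat) (Y1 Y2 : ('I_n -> K) -> Prop),
    L_algebraic B Y1 -> L_algebraic B Y2 ->
    L_algebraic B (fun x => Y1 x \/ Y2 x).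

Section Power.
Variables (G : group) (I : Type).
Let pmul (x y : I -> G) := fun i => gmul (x i) (y i).
Let pinv (x : I -> G) := fun i => ginv (x i).
Let pone : I -> G := fun _ => gone G.
Lemma pmulA x y z : pmul (pmul x y) z = pmul x (pmul y z).
Proof. apply: functional_extensionality => i; exact: gmulA. Qed.
Lemma pmul1 x : pmul pone x = x.
Proof. apply: functional_extensionality => i; exact: gmul1. Qed.
Lemma pmulV x : pmul (pinv x) x = pone.
Proof. apply: functional_extensionality => i; exact: gmulV. Qed.
Definition power_group : group := @Group (I -> G) pmul pinv pone pmulA pmul1 pmulV.
End Power.

Definition f_aut (G : group) (I : Type) (phi : G -> G) : power_group G I -> power_group G I :=
  fun g i => phi (g i).
Definition sigma_aut (G : group) (I : Type) (pi : I -> I) : power_group G I -> power_group G I :=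
  fun g i => g (pi i).

(* Main.v *)
Require Import Defs.
From mathcomp Require Import all_boot.
From Stdlib Require Import Classical FunctionalExtensionality.
Set Implicit Arguments. Unset Strict Implicit. Unset Printing Implicit Defensive.

Section Lift.
Variables (G : group) (I : Type) (n : nat).
Notation H := (power_group G I).

Fixpoint lift (s : term G 2) (u v : term H n) : term H n :=
  match s with
  | tVar i => if val i == 0 then u else v
  | tOne => tOne _ _
  | tMul a b => tMul (lift a u v) (lift b u v)
  | tInv a => tInv (lift a u v)
  | tApp f a => tApp (@f_aut G I f) (lift a u v)
  end.

Definition zz (a b : G) : 'I_2 -> G := fun i => if val i == 0 then a else b.

Lemma eval_lift (x : 'I_n -> H) s u v k :
  eval x (lift s u v) k = eval (zz (eval x u k) (eval x v k)) s.
Proof.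
  induction s as [i| |a IHa b IHb|a IHa|f a IHa]; simpl.
  - rewrite /zz; by case: (val i == 0).
  - reflexivity.
  - rewrite -IHa -IHb; reflexivity.
  - rewrite -IHa; reflexivity.
  - rewrite /f_aut IHa; reflexivity.
Qed.

Lemma Lterm_lift (A0 : (G -> G) -> Prop) (A : (H -> H) -> Prop)
  (hA : forall phi, A0 phi -> A (@f_aut G I phi)) s u v :
  is_Lterm A0 s -> is_Lterm A u -> is_Lterm A v -> is_Lterm A (lift s u v).
Proof.
  move=> hs hu hv; induction s as [i| |a IHa b IHb|a IHa|f a IHa]; simpl in *.
  - by case: (val i == 0).
  - done.
  - by case: hs => h1 h2; split; [apply IHa|apply IHb].
  - by apply IHa.
  - by case: hs => h1 h2; split; [apply hA|apply IHa].
Qed.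
End Lift.

Theorem corollary2 (G : group) (A0 : (G -> G) -> Prop)
  (hA0 : aut_subgroup A0) (hdom : L_equational_domain A0)
  (I : Type) (P : (I -> I) -> Prop)
  (hP : forall pi, P pi -> bijective pi)
  (htrans : forall i j : I, exists pi, P pi /\ pi i = j) :
  L_equational_domain
    (gen_aut_subgroup (K := power_group G I)
       (fun f => (exists phi, A0 phi /\ f = @f_aut G I phi) \/
                 (exists pi, P pi /\ f = @sigma_aut G I pi))).
Proof.
  set A := gen_aut_subgroup _.
  have hAf : forall phi, A0 phi -> A (@f_aut G I phi).
    by move=> phi h B _ hB; apply: hB; left; exists phi.
  have hAs : forall pi, P pi -> A (@sigma_aut G I pi).
    by move=> pi h B _ hB; apply: hB; right; exists pi.
  have alg0 : forall j : 'I_2, L_algebraic A0 (fun z : 'I_2 -> G => z j = gone G).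
    move=> j; exists (fun t => t = tVar G j); split.
    - by move=> t ->.
    - move=> z; split.
      + by move=> h t ->.
      + by move=> h; apply: (h (tVar G j)).
  have [SG [hSG hM]] := hdom 2 _ _ (alg0 ord0) (alg0 (@Ordinal 2 1 isT)).
  move=> n Y1 Y2 [S1 [hS1 hY1]] [S2 [hS2 hY2]].
  exists (fun t => exists s t1 t2 pi, SG s /\ S1 t1 /\ S2 t2 /\ P pi /\
            t = lift s (tApp (@sigma_aut G I pi) t1) t2).
  split.
  - move=> t [s [t1 [t2 [pi [h1 [h2 [h3 [h4 ->]]]]]]]].
    apply: Lterm_lift.
    + exact: hAf.
    + exact: hSG.
    + by split; [apply hAs|apply hS1].
    + exact: hS2.
  - move=> x; split.
    + move=> hY t [s [t1 [t2 [pi [h1 [h2 [h3 [h4 ->]]]]]]]].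
      apply: functional_extensionality => k.
      rewrite eval_lift.
      apply: (proj1 (hM _)) => //.
      case: hY => [/hY1 hx|/hY2 hx]; [left|right]; rewrite /zz /=.
      * by rewrite /sigma_aut (hx t1 h2).
      * by rewrite (hx t2 h3).
    + move=> hV; apply: NNPP => hn.
      have n1 : ~ V S1 x by move=> h; apply: hn; left; apply/hY1.
      have n2 : ~ V S2 x by move=> h; apply: hn; right; apply/hY2.
      have [t1 ht1] := not_all_ex_not _ _ n1.
      have [t2 ht2] := not_all_ex_not _ _ n2.
      have hs1 : S1 t1 by apply: NNPP => h; apply: ht1 => h'; exfalso; apply: h.
      have hs2 : S2 t2 by apply: NNPP => h; apply: ht2 => h'; exfalso; apply: h.
      have e1 : eval x t1 <> gone _ by move=> e; apply: ht1.
      have e2 : eval x t2 <> gone _ by move=> e; apply: ht2.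
      have [j hj] : exists j, eval x t1 j <> gone G.
        apply: NNPP => h; apply: e1; apply: functional_extensionality => j.
        by apply: NNPP => h'; apply: h; exists j.
      have [k hk] : exists k, eval x t2 k <> gone G.
        apply: NNPP => h; apply: e2; apply: functional_extensionality => k.
        by apply: NNPP => h'; apply: h; exists k.
      have [pi [hpi hpik]] := htrans k j.
      have nz : ~ V SG (zz (eval x t1 j) (eval x t2 k)).
        by move=> /hM [h|h]; rewrite /zz /= in h.
      have [s hs] := not_all_ex_not _ _ nz.
      have hsG : SG s by apply: NNPP => h; apply: hs => h'; exfalso; apply: h.
      apply: hs => _.
      have := hV _ (ex_intro _ s (ex_intro _ t1 (ex_intro _ t2 (ex_intro _ pi
                 (conj hsG (conj hs1 (conj hs2 (conj hpi erefl)))))))).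
      move=> /(f_equal (fun f => f k)); rewrite eval_lift /= /sigma_aut hpik.
      done.
Qed.
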